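(* For $1\leq d<m$, let $U_m^d$ denote the uniform matroid of rank $d$ on $m$ elements, let $F_m^d(z)=\sum_{i=0}^{d}\binom{m}{i}z^i$ be its rank-generating function, and let $H_m^d(q):=(1-q)^{d}F_m^d\left(\frac{q}{1-q}\right)$. If $q\in\mathbb{C}$ satisfies $H_m^d(q)=0$, then $(m-d)^{-1}\leq |q|\leq d(m-1)^{-1}$. In particular, $H_m^d(q)$ is Schur quasi-stable (all its complex zeros satisfy $|q|\leq 1$), i.e. $U_m^d$ belongs to the class of set systems whose $H$-polynomial is Schur quasi-stable.
   Context: For a set system $\Omega$ of degree $d$ (maximum face size) with $f_i$ faces of size $i$, the rank-generating function is $F_\Omega(z)=\sum_{i=0}^d f_i z^i$, and the $H$-polynomial is $H_\Omega(q):=(1-q)^{d}F_\Omega\left(\frac{q}{1-q}\right)$. A polynomial is Schur quasi-stable if all its complex zeros satisfy $|q|\leq 1$. *)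

(* Defs.v *)
From HB Require Import structures.
From mathcomp Require Import all_boot all_order all_algebra.
From mathcomp Require Import complex.
From mathcomp Require Import reals.
Set Implicit Arguments. Unset Strict Implicit. Unset Printing Implicit Defensive.
Import Order.TTheory GRing.Theory Num.Theory.
Local Open Scope ring_scope.

Definition unif_rank_gen (K : comNzRingType) (m d : nat) : {poly K} :=
  \sum_(i < d.+1) ('C(m, i))%:R *: 'X^i.

(* H-polynomial of a rank-generating function F of degree <= d:
   H(q) = (1-q)^d F(q/(1-q)) = sum_{i=0}^d f_i q^i (1-q)^(d-i). *)
Definition H_poly (K : comNzRingType) (d : nat) (F : {poly K}) : {poly K} :=
  \sum_(i < d.+1) F`_i *: ('X^i * (1 - 'X) ^+ (d - i)).

Definition schur_quasi_stable (R : realType) (p : {poly R[i]}) : Prop :=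
  forall q : R[i], root p q -> `|q| <= 1.

(* Main.v *)
Require Import Defs.
From HB Require Import structures.
From mathcomp Require Import all_boot all_order all_algebra.
From mathcomp Require Import complex.
From mathcomp Require Import reals.
From mathcomp Require Import ring zify.
Import Order.TTheory GRing.Theory Num.Theory.
Local Open Scope ring_scope.

Section P1.
Variable K : comNzRingType.

Definition hs (m d : nat) (z : K) :=
  \sum_(i < d.+1) ('C(m, i))%:R * z ^+ i * (1 - z) ^+ (d - i).
Definition Ss (k d : nat) (z : K) :=
  \sum_(j < d.+1) ('C(k + j, j))%:R * z ^+ j.

Lemma horner_H m d z : (H_poly d (unif_rank_gen K m d)).[z] = hs m d z.
Proof.
rewrite /H_poly /hs horner_sum; apply: eq_bigr => i _.
rewrite hornerZ hornerM hornerXn horner_exp hornerD hornerN hornerX hornerC.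
rewrite /unif_rank_gen coef_sum (bigD1 i) //= big1 ?addr0 ?mulrA.
  by rewrite coefZ coefXn eqxx mulr1.
move=> j /negbTE ji; rewrite coefZ coefXn.
by rewrite eq_sym -(inj_eq val_inj) /= in ji; rewrite ji mulr0.
Qed.

Lemma Spascal k d z : Ss k.+1 d.+1 z = Ss k d.+1 z + z * Ss k.+1 d z.
Proof.
rewrite /Ss big_ord_recl [in X in _ = X + _]big_ord_recl /= !addn0 !bin0.
rewrite -addrA; congr (_ + _).
rewrite mulr_sumr -big_split /=; apply: eq_bigr => i _.
rewrite /bump /= add1n addnS binS natrD mulrDl exprS; congr (_ + _).
  by rewrite addSn addnS.
by rewrite mulrCA.
Qed.

Lemma hsS m d z : hs m d.+1 z = (1 - z) * hs m d z + ('C(m, d.+1))%:R * z ^+ d.+1.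
Proof.
rewrite /hs big_ord_recr /= subnn expr0 mulr1; congr (_ + _).
rewrite mulr_sumr; apply: eq_bigr => i _.
by rewrite subSn ?exprS; [rewrite mulrCA; congr (_ * _); rewrite mulrC | rewrite -ltnS].
Qed.

Lemma hs_S d : forall k z, hs (k + d).+1 d z = Ss k d z.
Proof.
elim: d => [|d IH] k z.
  by rewrite /hs /Ss !big_ord1 /= !bin0 !expr0 !mulr1.
rewrite hsS (_ : (k + d.+1).+1 = (k.+1 + d).+1); last by rewrite addnS addSn.
rewrite IH.
have -> : Ss k d.+1 z = Ss k.+1 d.+1 z - z * Ss k.+1 d z by rewrite Spascal addrK.
rewrite /Ss [in X in _ = X - _]big_ord_recr /= mulrBl mul1r.
rewrite (_ : (k.+1 + d).+1 = k.+1 + d.+1)%N; last by rewrite addnS.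
by rewrite addrAC.
Qed.
End P1.
Section P2.
Variable C : numDomainType.

Lemma upper_real (b : nat -> C) (bN r x : C) (N : nat) :
  0 < r -> 0 <= x -> (forall i, (i < N)%N -> 0 <= b i) -> 0 < bN ->
  \sum_(i < N) b i * r ^+ i = bN * r ^+ N ->
  bN * x ^+ N <= \sum_(i < N) b i * x ^+ i -> x <= r.
Proof.
move=> r0 x0 b0 bN0 Er Ex.
have rR : r \is Num.real by rewrite gtr0_real.
have xR : x \is Num.real by rewrite ger0_real.
rewrite real_leNgt //; apply/negP => rx.
case: N b0 Er Ex => [|N] b0 Er Ex.
  by move: Er; rewrite big_ord0 expr0 mulr1 => /esym/eqP; rewrite (gt_eqF bN0).
have key : r ^+ N * \sum_(i < N.+1) b i * x ^+ i <= x ^+ N * (bN * r ^+ N.+1).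
  rewrite -Er !mulr_sumr; apply: ler_sum => i _.
  have hi : (i <= N)%N by rewrite -ltnS.
  rewrite mulrCA [x ^+ N * _]mulrCA; apply: ler_wpM2l; first exact: b0.
  move: (nat_of_ord i) hi => j hj.
  rewrite -(subnK hj) !exprD mulrC -mulrA [x ^+ _ * r ^+ _]mulrC mulrA.
  rewrite mulrAC (mulrC (x ^+ j)) [in X in _ <= X]mulrC.
  rewrite [X in _ <= X]mulrC (mulrC (x ^+ j) (r ^+ j)).
  apply: ler_wpM2l; first by rewrite mulr_ge0 // exprn_ge0 // ltW.
  by apply: lerXn2r; rewrite ?nnegrE ?(ltW r0) ?(ltW rx).
have : r ^+ N * (bN * x ^+ N.+1) <= x ^+ N * (bN * r ^+ N.+1).
  apply: le_trans key; apply: ler_wpM2l => //; by rewrite exprn_ge0 // ltW.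
have rx0 : 0 < x by apply: lt_trans rx.
have e1 : r ^+ N * (bN * x ^+ N.+1) = x * (r ^+ N * bN * x ^+ N) by rewrite exprS; ring.
have e2 : x ^+ N * (bN * r ^+ N.+1) = r * (r ^+ N * bN * x ^+ N) by rewrite exprS; ring.
rewrite e1 e2 ler_pM2r; first by rewrite lt_geF.
by rewrite !mulr_gt0 // exprn_gt0.
Qed.
Lemma lower_real (c : nat -> C) (b0 r x : C) (N : nat) :
  0 < r -> 0 <= x -> (forall i, (i < N)%N -> 0 <= c i) -> 0 < b0 ->
  \sum_(i < N) c i * r ^+ i.+1 = b0 ->
  b0 <= \sum_(i < N) c i * x ^+ i.+1 -> r <= x.
Proof.
move=> r0 x0 c0 b00 Er Ex.
have rR : r \is Num.real by rewrite gtr0_real.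
have xR : x \is Num.real by rewrite ger0_real.
rewrite real_leNgt //; apply/negP => xr.
have key : r * \sum_(i < N) c i * x ^+ i.+1 <= x * b0.
  rewrite -Er !mulr_sumr; apply: ler_sum => i _.
  rewrite mulrCA [x * _]mulrCA; apply: ler_wpM2l; first exact: c0.
  rewrite !exprS !mulrA (mulrC r x); apply: ler_wpM2l; first by rewrite mulr_ge0 // ltW.
  by apply: lerXn2r; rewrite ?nnegrE ?(ltW r0) ?(ltW xr).
have : r * b0 <= x * b0 by apply: le_trans key; apply: ler_wpM2l => //; exact: ltW.
by rewrite ler_pM2r // lt_geF.
Qed.
End P2.
Section P3.
Variable F : comNzRingType.
Definition sh (a : nat -> F) (i : nat) := if i is i'.+1 then a i' else 0.

Lemma id_up (a : nat -> F) (rho w : F) d :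
  rho * (\sum_(i < d.+1) a i * w ^+ i) - w * (\sum_(i < d.+1) a i * w ^+ i)
  = \sum_(i < d.+1) (rho * a i - sh a i) * w ^+ i
    - a d * w ^+ d.+1.
Proof.
have -> : w * (\sum_(i < d.+1) a i * w ^+ i)
   = \sum_(i < d.+2) sh a i * w ^+ i.
  rewrite [RHS]big_ord_recl /sh /= mul0r add0r mulr_sumr; apply: eq_bigr => i _.
  by rewrite /bump /= add1n exprS mulrCA.
rewrite [X in _ - X = _]big_ord_recr /= opprD addrA; congr (_ - _).
rewrite mulr_sumr -sumrB; apply: eq_bigr => i _; by rewrite mulrBl mulrA.
Qed.

Lemma id_low (a : nat -> F) (sg w : F) d : a d.+1 = 0 ->
  \sum_(i < d.+1) (a i - sg * a i.+1) * w ^+ i.+1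
  = w * (\sum_(i < d.+1) a i * w ^+ i) - sg * (\sum_(i < d.+1) a i * w ^+ i)
    + sg * a 0.
Proof.
move=> ad.
have E1 : w * (\sum_(i < d.+1) a i * w ^+ i) = \sum_(i < d.+1) a i * w ^+ i.+1.
  by rewrite mulr_sumr; apply: eq_bigr => i _; rewrite exprS mulrCA.
have E2 : \sum_(i < d.+1) a i * w ^+ i = a 0%N + \sum_(i < d.+1) a i.+1 * w ^+ i.+1.
  have -> : \sum_(i < d.+1) a i * w ^+ i = \sum_(i < d.+2) a i * w ^+ i.
    by rewrite [RHS]big_ord_recr /= ad mul0r addr0.
  by rewrite big_ord_recl /= expr0 mulr1.
have E3 : \sum_(i < d.+1) (a i - sg * a i.+1) * w ^+ i.+1 =
   \sum_(i < d.+1) a i * w ^+ i.+1 - sg * \sum_(i < d.+1) a i.+1 * w ^+ i.+1.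
  by rewrite mulr_sumr -sumrB; apply: eq_bigr => i _; ring.
rewrite E3 E1 E2; ring.
Qed.
End P3.

Lemma natA (k i d : nat) : (i.+1 <= d)%N ->
  ((k + d) * 'C(k + i, i) <= d * 'C(k + i.+1, i.+1))%N.
Proof.
move=> id.
have h := mul_bin_diag (k + i).+1 i; rewrite /= -addnS in h.
rewrite -(leq_pmul2l (ltn0Sn i)) [X in (_ <= X)%N]mulnCA -h mulnA [X in (_ <= X)%N]mulnA.
apply: leq_mul => //; nia.
Qed.

Lemma natB (k i : nat) : ('C(k + i.+1, i.+1) <= k.+1 * 'C(k + i, i))%N.
Proof.
have h := mul_bin_diag (k + i).+1 i; rewrite /= -addnS in h.
rewrite -(leq_pmul2l (ltn0Sn i)) -h mulnA.
apply: leq_mul => //; nia.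
Qed.

Theorem proposition6p3 (R : realType) (m d : nat) :
  (1 <= d)%N -> (d < m)%N ->
  (forall q : R[i], root (H_poly d (unif_rank_gen R[i] m d)) q ->
     ((m - d)%:R)^-1 <= `|q| <= d%:R / (m - 1)%:R)
  /\ schur_quasi_stable (H_poly d (unif_rank_gen R[i] m d)).
Proof.
move=> d1 dm.
have [k hm] : exists k, m = (k + d).+1 by exists (m - d.+1)%N; lia.
subst m.
have -> : ((k + d).+1 - d)%N = k.+1 by lia.
have -> : ((k + d).+1 - 1)%N = (k + d)%N by lia.
have kd0 : 0 < (k + d)%:R :> R[i] by rewrite ltr0n; lia.
pose a := fun j : nat => if (j <= d)%N then ('C(k + j, j))%:R else 0 : R[i].
have bounds : forall q : R[i], root (H_poly d (unif_rank_gen R[i] (k + d).+1 d)) q ->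
     (k.+1%:R)^-1 <= `|q| <= d%:R / (k + d)%:R.
  move=> q /rootP; rewrite horner_H hs_S => Pq.
  have PA : forall w, Ss _ k d w = \sum_(j < d.+1) a j * w ^+ j.
    move=> w; apply: eq_bigr => j _; by rewrite /a -ltnS ltn_ord.
  rewrite PA in Pq.
  have ad : a d.+1 = 0 by rewrite /a ltnn.
  have a0 : a 0%N = 1 by rewrite /a leq0n addn0 bin0.
  apply/andP; split.
  - pose sg : R[i] := (k.+1%:R)^-1.
    have sg0 : 0 < sg by rewrite invr_gt0 ltr0Sn.
    apply: (@lower_real _ (fun i => a i - sg * a i.+1) (sg * a 0%N) _ _ d.+1).
    + exact: sg0.
    + exact: normr_ge0.
    + move=> i; rewrite ltnS leq_eqVlt => /orP [/eqP -> | id].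
        by rewrite ad mulr0 subr0 /a leqnn ler0n.
      rewrite /a id (ltnW id) subr_ge0 mulrC ler_pdivrMr ?ltr0Sn //.
      by rewrite -natrM ler_nat mulnC natB.
    + by rewrite a0 mulr1.
    + by rewrite (id_low _ _ _ _ _ ad) subrr add0r.
    + have := id_low _ a sg q _ ad; rewrite Pq !mulr0 subrr add0r => E.
      rewrite -(@ger0_norm _ (sg * a 0%N)); last by rewrite a0 mulr1 ltW.
      rewrite -E.
      apply: le_trans (ler_norm_sum _ _ _) _.
      apply: ler_sum => i _; rewrite normrM normrX ger0_norm //.
      have : (i <= d)%N by rewrite -ltnS.
      rewrite leq_eqVlt => /orP [/eqP -> | id].
        by rewrite ad mulr0 subr0 /a leqnn ler0n.
      rewrite /a id (ltnW id) subr_ge0 mulrC ler_pdivrMr ?ltr0Sn //.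
      by rewrite -natrM ler_nat mulnC natB.
  - pose rho : R[i] := d%:R / (k + d)%:R.
    have rho0 : 0 < rho by rewrite divr_gt0 // ltr0n.
    have bge : forall i, (i < d.+1)%N -> 0 <= rho * a i - sh _ a i.
      case=> [|i] id.
        by rewrite /= subr0 a0 mulr1 ltW.
      rewrite ltnS in id; rewrite /sh /a id (ltnW id) subr_ge0 /rho mulrAC ler_pdivlMr //.
      by rewrite -!natrM ler_nat mulnC natA.
    apply: (@upper_real _ (fun i => rho * a i - sh _ a i) (a d) _ _ d.+1).
    + exact: rho0.
    + exact: normr_ge0.
    + exact: bge.
    + by rewrite /a leqnn ltr0n bin_gt0 leq_addl.
    + by apply/eqP; rewrite -subr_eq0 -id_up subrr.
    + have := id_up _ a rho q d; rewrite Pq !mulr0 subrr => /esym/eqP; rewrite subr_eq0 => /eqP E.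
      have ad0 : 0 <= a d by rewrite /a leqnn ler0n.
      rewrite -(ger0_norm ad0) -normrX -normrM -E.
      apply: le_trans (ler_norm_sum _ _ _) _.
      apply: ler_sum => i _; rewrite normrM normrX ger0_norm //; exact: bge.
split=> // q /bounds /andP [_ h].
apply: le_trans h _.
by rewrite ler_pdivrMr // mul1r ler_nat leq_addl.
Qed.
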